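(* Every power $p^m$ ($m\ge1$) of a block-cyclic permutation $p$ is block-cyclic, and every block-cyclic permutation avoids $321$; hence every block-cyclic permutation is strongly 321-avoiding. Moreover, if $h_n$ is the number of block-cyclic permutations of length $n$ (with $h_0=1$), then \[\sum_{n\ge0}h_nz^n=\frac{1}{1-z-\sum_{k\ge2}(k-1)z^k}=\frac{(1-z)^2}{1-3z+2z^2-z^3}.\]
   Context: Permutations are written in one-line notation $p=p_1\cdots p_n$ with $p_i=p(i)$; $p^m$ is the $m$-fold composition of $p$ with itself. $p$ contains a pattern $q=q_1\cdots q_k$ if there are indices $i_1<\cdots<i_k$ with $p_{i_r}<p_{i_s}$ iff $q_r<q_s$; otherwise $p$ avoids $q$. A permutation $p$ is strongly $q$-avoiding if both $p$ and $p^2$ avoid $q$. A permutation $p$ of length $n$ is block-cyclic if $p$ can be cut into blocks $B_1,\dots,B_t$ of consecutive positions such that for $i<j$ every entry of $B_i$ is smaller than every entry of $B_j$ (so each block's set of entries is an interval of integers $\{a+1,\dots,a+k\}$ occupying positions $a+1,\dots,a+k$), and each block either is a singleton or, in one-line notation, reads $(a+i)(a+i+1)\cdots(a+k)(a+1)\cdots(a+i-1)$ for some integers $1<i\le k$ (a non-identity power of the cycle $(a+1\;a+2\;\cdots\;a+k)$ restricted to the block). *)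

(* Defs.v *)
From HB Require Import structures.
From mathcomp Require Import all_boot all_order all_algebra all_fingroup.
From Stdlib Require Import ClassicalEpsilon.
Set Implicit Arguments. Unset Strict Implicit. Unset Printing Implicit Defensive.
Import GRing.Theory.

(* Permutations of length n are elements of 'S_n (positions/values 0..n-1);
   one-line notation p_i = p i.  Powers p ^+ m are m-fold compositions. *)

Definition contains (n k : nat) (p : 'S_n) (q : 'S_k) : Prop :=
  exists f : 'I_k -> 'I_n,
    (forall r s : 'I_k, r < s -> f r < f s) /\
    (forall r s : 'I_k, (p (f r) < p (f s)) = (q r < q s)).

Definition avoids (n k : nat) (p : 'S_n) (q : 'S_k) : Prop := ~ contains p q.

Definition strongly_avoids (n k : nat) (p : 'S_n) (q : 'S_k) : Prop :=
  avoids p q /\ avoids (p ^+ 2)%g q.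

(* The pattern 321 (0-indexed: i |-> 2 - i). *)
Definition pat321 : 'S_3 := perm (@rev_ord_inj 3).

(* Block-cyclic: a list of blocks (k, r) of sizes k (summing to n), laid out
   consecutively; the block starting at position a (0-indexed) sends position
   a + j to a + ((j + r) mod k).  A block is a singleton (k = 1, r = 0) or a
   non-identity power of the cycle, i.e. 1 <= r < k (r = i - 1 in the paper). *)
Definition block_cyclic (n : nat) (p : 'S_n) : Prop :=
  exists bs : seq (nat * nat),
    [/\ all (fun b => ((b.1 == 1%N) && (b.2 == 0%N)) || (0 < b.2 < b.1)) bs,
        sumn (map fst bs) = n &
        forall (t j : nat) (i : 'I_n),
          t < size bs -> j < (nth (0, 0) bs t).1 ->
          val i = sumn (take t (map fst bs)) + j ->
          val (p i) = sumn (take t (map fst bs))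
                      + (j + (nth (0, 0) bs t).2) %% (nth (0, 0) bs t).1 ].

Definition asbool (P : Prop) : bool :=
  if excluded_middle_informative P then true else false.

Definition h (n : nat) : nat := #|[pred p : 'S_n | asbool (block_cyclic p)]|.

(* Formal power series over int as coefficient sequences, Cauchy product. *)
Definition fps_mul (f g : nat -> int) (n : nat) : int :=
  (\sum_(k < n.+1) f k * g (n - k)%N)%R.

Definition den1 (k : nat) : int :=
  if k == 0%N then 1%R else if k == 1%N then (-1)%R else (- (k.-1)%:Z)%R.
Definition den2 (k : nat) : int := nth 0%R [:: 1; -3; 2; -1]%R k.
Definition num2 (k : nat) : int := nth 0%R [:: 1; -2; 1]%R k.
Definition one_fps (k : nat) : int := if k == 0%N then 1%R else 0%R.

(* Main.v *)
Require Import Defs.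
From HB Require Import structures.
From mathcomp Require Import all_boot all_order all_algebra all_fingroup.
From mathcomp Require Import zify.
From Stdlib Require Import ClassicalEpsilon.
Set Implicit Arguments. Unset Strict Implicit. Unset Printing Implicit Defensive.

Fixpoint pf (bs : seq (nat * nat)) (i : nat) : nat :=
  match bs with
  | [::] => i
  | b :: t => if i < b.1 then (i + b.2) %% b.1 else b.1 + pf t (i - b.1)
  end.

Definition validb (b : nat * nat) : bool :=
  ((b.1 == 1%N) && (b.2 == 0%N)) || (0 < b.2 < b.1).

Definition sk (bs : seq (nat * nat)) := sumn (map fst bs).

Lemma validb_pos b : validb b -> 0 < b.1.
Proof. by case: b => k r; rewrite /validb /= => /orP [/andP [/eqP -> _] | /andP [h1 h2]] //; lia. Qed.

Lemma validb_lt b : validb b -> b.2 < b.1.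
Proof. by case: b => k r; rewrite /validb /= => /orP [/andP [/eqP -> /eqP ->] | /andP [h1 h2]]. Qed.

Lemma pf_take bs t j : t < size bs -> j < (nth (0,0) bs t).1 ->
  pf bs (sumn (take t (map fst bs)) + j) =
  sumn (take t (map fst bs)) + (j + (nth (0, 0) bs t).2) %% (nth (0, 0) bs t).1.
Proof.
elim: bs t => [|b s IH] [|t] //= ht hj.
  by rewrite add0n hj.
have -> : b.1 + sumn (take t [seq i.1 | i <- s]) + j < b.1 = false by lia.
by rewrite -addnA addKn IH // addnA.
Qed.

Lemma decomp bs i : i < sk bs -> exists t j, [/\ t < size bs, j < (nth (0,0) bs t).1 &
   i = sumn (take t (map fst bs)) + j].
Proof.
rewrite /sk; elim: bs i => [|b s IH] i //= hi.
case: (ltnP i b.1) => hib.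
  by exists 0, i.
have [t [j [h1 h2 h3]]] : exists t j, [/\ t < size s, j < (nth (0,0) s t).1 &
   i - b.1 = sumn (take t (map fst s)) + j] by apply: IH; lia.
exists t.+1, j; split => //=; lia.
Qed.

Lemma bc_iff n (p : 'S_n) : block_cyclic p <->
  exists bs, [/\ all validb bs, sk bs = n & forall i : 'I_n, val (p i) = pf bs i].
Proof.
split.
  move=> [bs [hv hs hp]]; exists bs; split => // i.
  have [t [j [h1 h2 h3]]] := decomp (i := i) (bs := bs) (ltac:(rewrite /sk hs; exact: ltn_ord i)).
  by rewrite (hp t j i h1 h2 h3) h3 pf_take.
move=> [bs [hv hs hp]]; exists bs; split => // t j i h1 h2 h3.
by rewrite hp h3 pf_take.
Qed.
Definition powblk m (b : nat * nat) : seq (nat * nat) :=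
  if (m * b.2) %% b.1 == 0 then nseq b.1 (1, 0) else [:: (b.1, (m * b.2) %% b.1)].

Definition powlist m bs := flatten (map (powblk m) bs).

Lemma pf_nseq k i : i < k -> pf (nseq k (1,0)) i = i.
Proof. elim: k i => [|k IH] [|i] //= hi; rewrite IH //; lia. Qed.

Lemma sk_cat a b : sk (a ++ b) = sk a + sk b.
Proof. by rewrite /sk map_cat sumn_cat. Qed.

Lemma pf_cat a b i : pf (a ++ b) i = if i < sk a then pf a i else sk a + pf b (i - sk a).
Proof.
rewrite /sk; elim: a i => [|x a IH] i /=; first by rewrite add0n subn0.
case: ifP => hx; first by have -> : i < x.1 + sumn [seq i.1 | i <- a] by lia.
rewrite IH; case: ifP => h1; case: ifP => h2 //; try lia.
by rewrite subnDA addnA.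
Qed.

Lemma iter_block k r t m i : 0 < k -> i < k ->
  iter m (pf ((k, r) :: t)) i = (i + m * r) %% k.
Proof.
move=> hk hi; elim: m => [|m IH] /=; first by rewrite mul0n addn0 modn_small.
rewrite IH /= ltn_pmod // modnDml mulSn; congr (_ %% _); lia.
Qed.

Lemma iter_tail k r t m i : k <= i ->
  iter m (pf ((k, r) :: t)) i = k + iter m (pf t) (i - k).
Proof.
move=> hi; elim: m => [|m IH] /=; first by lia.
rewrite IH /=; have -> : k + iter m (pf t) (i - k) < k = false by lia.
by rewrite addKn.
Qed.

Lemma sk_powlist m bs : all validb bs -> sk (powlist m bs) = sk bs.
Proof.
elim: bs => [|b s IH] //= /andP [hb hs].
rewrite /powlist /= -/(powlist m s) sk_cat IH // /powblk.
by case: ifP => _; rewrite /sk //= ?map_nseq ?sumn_nseq ?addn0 ?mul1n.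
Qed.

Lemma valid_powlist m bs : all validb bs -> all validb (powlist m bs).
Proof.
elim: bs => [|b s IH] //= /andP [hb hs].
rewrite /powlist /= -/(powlist m s) all_cat IH // andbT /powblk.
case: ifP => h0.
  by apply/allP => x /nseqP [-> _].
rewrite /= andbT /validb /= lt0n h0 ltn_pmod ?orbT //; exact: validb_pos.
Qed.

Lemma pf_powlist m bs i : all validb bs -> i < sk bs ->
  pf (powlist m bs) i = iter m (pf bs) i.
Proof.
elim: bs i => [|[k r] s IH] i /=.
  by rewrite /sk.
move=> /andP [hb hs] hi.
have hk := validb_pos hb; simpl in hk.
rewrite /powlist /= -/(powlist m s) pf_cat.
have -> : sk (powblk m (k, r)) = k.
  by rewrite /powblk /=; case: ifP => _; rewrite /sk //= ?map_nseq ?sumn_nseq ?addn0 ?mul1n.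
case: (ltnP i k) => hik.
  rewrite iter_block // /powblk /=; case: ifP => h0.
    by rewrite pf_nseq // -modnDmr (eqP h0) addn0 modn_small.
  by rewrite /= hik modnDmr.
rewrite iter_tail // IH //; rewrite /sk /= in hi *; lia.
Qed.

Lemma part1 n m (p : 'S_n) : block_cyclic p -> block_cyclic (p ^+ m)%g.
Proof.
move/bc_iff => [bs [hv hs hp]]; apply/bc_iff.
exists (powlist m bs); split; [exact: valid_powlist | by rewrite sk_powlist |].
move=> i; rewrite permX pf_powlist //; last by rewrite hs.
elim: m => [|m IH] //=; by rewrite hp IH.
Qed.
Lemma rot_val x r k : x < k -> r < k ->
  (x + r) %% k = if x + r < k then x + r else x + r - k.
Proof.
move=> hx hr; case: ifP => h; first by rewrite modn_small.
have {1}-> : x + r = (x + r - k) + k by lia.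
rewrite modnDr modn_small //; lia.
Qed.

Lemma pf_lt bs i : all validb bs -> i < sk bs -> pf bs i < sk bs.
Proof.
rewrite /sk; elim: bs i => [|b s IH] i //= /andP [hb hs] hi.
case: ifP => h.
  have := ltn_pmod (i + b.2) (validb_pos hb); lia.
have := IH (i - b.1) hs; lia.
Qed.

Lemma pf_ge bs b i : b.1 <= i -> b.1 <= pf (b :: bs) i.
Proof. by move=> h /=; rewrite ltnNge h /= leq_addr. Qed.

Lemma no_dec bs a b c : all validb bs -> a < b -> b < c -> c < sk bs ->
  pf bs c < pf bs b -> pf bs b < pf bs a -> False.
Proof.
rewrite /sk; elim: bs a b c => [|[k r] s IH] a b c /=; first by move=> _; lia.
move=> /andP [hb hs] hab hbc hc.
have hk := validb_pos hb; have hr := validb_lt hb; simpl in hk, hr.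
case: (ltnP c k) => hck.
  have ha : a < k by lia. have hb' : b < k by lia.
  rewrite ha hb' !rot_val //; repeat case: ifP; lia.
case: (ltnP a k) => hak.
  have := ltn_pmod (a + r) hk; case: ifP => _; try lia.
have hb' : k <= b by lia.
rewrite (ltnNge b k) hb' /= !ltn_add2l => h1 h2.
apply: (IH (a - k) (b - k) (c - k)) => //; lia.
Qed.

Lemma part2 n (p : 'S_n) : block_cyclic p -> avoids p pat321.
Proof.
move/bc_iff => [bs [hv hs hp]] [f [hinc hf]].
pose i0 : 'I_3 := Ordinal (isT : 0 < 3).
pose i1 : 'I_3 := Ordinal (isT : 1 < 3).
pose i2 : 'I_3 := Ordinal (isT : 2 < 3).
have e1 := hf i1 i0. have e2 := hf i2 i1.
rewrite /pat321 !permE /= in e1 e2.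
have a1 := hinc i0 i1 isT. have a2 := hinc i1 i2 isT.
rewrite !hp in e1 e2.
apply: (no_dec hv a1 a2); rewrite ?e1 ?e2 //.
by rewrite hs.
Qed.

Lemma part3 n (p : 'S_n) : block_cyclic p -> strongly_avoids p pat321.
Proof. move=> h; split; [exact: part2 | apply: part2; exact: part1]. Qed.
Lemma pf_inj bs i j : all validb bs -> i < sk bs -> j < sk bs ->
  pf bs i = pf bs j -> i = j.
Proof.
rewrite /sk; elim: bs i j => [|[k r] s IH] i j //= /andP [hb hs] hi hj.
have hk := validb_pos hb; simpl in hk.
have ltk x : (x + r) %% k < k by exact: ltn_pmod.
case: (ltnP i k) => hik; case: (ltnP j k) => hjk.
- move=> /eqP; rewrite eqn_modDr modn_small // modn_small //; by move/eqP.
- have := ltk i; lia.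
- have := ltk j; lia.
- move=> /eqP; rewrite eqn_add2l => /eqP /IH h.
  suff : i - k = j - k by lia.
  apply: h => //; lia.
Qed.

Lemma exists_perm n bs : all validb bs -> sk bs = n ->
  exists q : 'S_n, forall i, val (q i) = pf bs i.
Proof.
move=> hv hs.
have lt (i : 'I_n) : pf bs i < n.
  have := @pf_lt bs i hv; rewrite hs; apply; exact: ltn_ord.
pose F := fun i : 'I_n => Ordinal (lt i).
have Finj : injective F.
  move=> i j /(congr1 val) /= e; apply: val_inj; apply: (pf_inj hv _ _ e); by rewrite hs.
by exists (perm Finj) => i; rewrite permE.
Qed.

Lemma first_block k r k' r' : validb (k, r) -> validb (k', r') -> k < k' ->
  exists2 i, i < k & k <= (i + r') %% k'.
Proof.
move=> hb hb'; have hk := validb_pos hb; have hr' := validb_lt hb'; simpl in hk, hr'.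
move=> hkk.
have hr0 : 0 < r'.
  move: hb'; rewrite /validb /= => /orP [/andP [/eqP e _]|/andP [h _]] //; lia.
case: (leqP k r') => h.
  by exists 0 => //; rewrite add0n modn_small.
exists (k - r'); first lia.
rewrite subnK ?modn_small //; lia.
Qed.

Lemma pf_uniq bs bs' : all validb bs -> all validb bs' -> sk bs = sk bs' ->
  (forall i, i < sk bs -> pf bs i = pf bs' i) -> bs = bs'.
Proof.
rewrite /sk; elim: bs bs' => [|[k r] s IH] [|[k' r'] s'] //=.
- move=> _ /andP [hb _]; have := validb_pos hb => /= ; lia.
- move=> /andP [hb _]; have := validb_pos hb => /= ; lia.
move=> /andP [hb hs] /andP [hb' hs'] hsum hpf.
have hk := validb_pos hb; have hk' := validb_pos hb'; simpl in hk, hk'.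
have hr := validb_lt hb; have hr' := validb_lt hb'; simpl in hr, hr'.
have ekk : k = k'.
  case: (ltngtP k k') => // c.
    have [i hi hki] := first_block hb hb' c.
    have := hpf i ltac:(lia); rewrite hi (ltn_trans hi c).
    have := ltn_pmod (i + r) hk; lia.
  have [i hi hki] := first_block hb' hb c.
  have := hpf i ltac:(lia); rewrite hi (ltn_trans hi c).
  have := ltn_pmod (i + r') hk'; lia.
subst k'.
have err : r = r'.
  have := hpf 0 ltac:(lia); rewrite hk !add0n !modn_small //.
subst r'; congr (_ :: _); apply: IH => //; first lia.
move=> i hi; have := hpf (k + i) ltac:(lia).
by rewrite ltnNge leq_addr /= addKn => /eqP; rewrite eqn_add2l => /eqP.
Qed.
Definition rots k := if k == 1 then [:: 0] else iota 1 k.-1.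
Definition blocks n := [seq (k, r) | k <- iota 1 n, r <- rots k].
Fixpoint enumB (f n : nat) : seq (seq (nat * nat)) :=
  match f with
  | 0 => if n == 0 then [:: [::]] else [::]
  | f'.+1 => if n == 0 then [:: [::]] else
             [seq b :: s | b <- blocks n, s <- enumB f' (n - b.1)]
  end.

Lemma mem_blocks n b : (b \in blocks n) = validb b && (b.1 <= n).
Proof.
case: b => k r /=; apply/allpairsPdep/andP.
  move=> [k' [r' [hk hr [-> ->]]]]; move: hk hr; rewrite mem_iota /rots /validb /=.
  case: eqP => [-> | hne]; first by rewrite inE => h1 /eqP ->; split => //; lia.
  rewrite mem_iota => h1 h2; split; last lia.
  apply/orP; right; apply/andP; split; lia.
move=> [hv hkn]; exists k, r; split => //.
  rewrite mem_iota; have := validb_pos hv; simpl; lia.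
move: hv; rewrite /rots /validb /=; case: eqP => [-> | hne].
  by rewrite inE; case/orP => /andP [] //; lia.
rewrite mem_iota; case/orP => /andP [] //; try lia.
Qed.

Lemma sk_nil_valid bs : all validb bs -> sk bs = 0 -> bs = [::].
Proof.
case: bs => [|b s] //= /andP [hb _]; have := validb_pos hb; rewrite /sk /=; lia.
Qed.

Lemma mem_enumB f n bs : n <= f ->
  (bs \in enumB f n) = all validb bs && (sk bs == n).
Proof.
elim: f n bs => [|f IH] n bs hn /=.
  have -> : n = 0 by lia.
  rewrite eqxx inE; apply/eqP/andP => [-> //| [hv /eqP hs]]; exact: sk_nil_valid.
case: eqP => [-> | hn0].
  rewrite inE; apply/eqP/andP => [-> //| [hv /eqP hs]]; exact: sk_nil_valid.
apply/allpairsPdep/andP.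
  move=> [b [s [hb hs ->]]]; move: hb; rewrite mem_blocks => /andP [hv hbn].
  move: hs; rewrite IH; last by have := validb_pos hv; lia.
  move=> /andP [hsv /eqP hss]; rewrite /= hv hsv; split => //.
  by rewrite /sk /= -/(sk s) hss subnKC.
case: bs => [|b s] [hv /eqP hs]; first by rewrite /sk /= in hs; lia.
move: hv => /= /andP [hb hsv].
exists b, s; split => //.
  rewrite mem_blocks hb /= -hs /sk /=; lia.
rewrite IH; last by have := validb_pos hb; lia.
rewrite hsv /= -hs /sk /=; apply/eqP; lia.
Qed.

Lemma uniq_blocks n : uniq (blocks n).
Proof.
apply: allpairs_uniq_dep; first exact: iota_uniq.
  move=> k _; rewrite /rots; case: eqP => // _; exact: iota_uniq.
by move=> [x y] [x' y'] _ _ /= [-> ->].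
Qed.

Lemma uniq_enumB f n : uniq (enumB f n).
Proof.
elim: f n => [|f IH] n /=; first by case: eqP.
case: eqP => // _.
apply: allpairs_uniq_dep; first exact: uniq_blocks.
  by move=> b _; apply: IH.
by move=> [x y] [x' y'] _ _ /= [-> ->].
Qed.

Definition hh n := size (enumB n n).

Lemma size_enumB f n : n <= f -> size (enumB f n) = hh n.
Proof.
move=> hn; apply: perm_size; apply: uniq_perm; try exact: uniq_enumB.
by move=> bs; rewrite !mem_enumB.
Qed.

Lemma sum_const_seq (T : Type) (s : seq T) (c : nat) : \sum_(x <- s) c = size s * c.
Proof. elim: s => [|x s IH]; rewrite ?big_nil ?big_cons ?IH //=; lia. Qed.

Definition w k := if k == 1 then 1 else k.-1.

Lemma hh_rec m : hh m.+1 = \sum_(k < m.+1) w (m.+1 - k) * hh k.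
Proof.
have -> : hh m.+1 = size [seq b :: s | b <- blocks m.+1, s <- enumB m (m.+1 - b.1)] by [].
rewrite size_allpairs_dep sumnE big_map.
rewrite (eq_big_seq (fun b : nat * nat => hh (m.+1 - b.1))); last first.
  move=> b; rewrite mem_blocks => /andP [hv _]; apply: size_enumB.
  have := validb_pos hv; lia.
rewrite big_allpairs_dep.
under eq_bigr => k _ do rewrite /= sum_const_seq.
rewrite -[iota 1 _]/(iota (1 + 0) _) iotaDl big_map.
rewrite (_ : iota 0 m.+1 = index_iota 0 m.+1) ?big_mkord; last by rewrite /index_iota subn0.
rewrite (reindex_inj rev_ord_inj) /=.
apply: eq_bigr => i _.
have hi := ltn_ord i.
have -> : m.+1 - (1 + (m - i)) = i by lia.
congr (_ * _).
rewrite /rots /w; have -> : 1 + (m - i) = m.+1 - i by lia.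
case: eqP => // _; by rewrite size_iota.
Qed.
Lemma asboolP (P : Prop) : asbool P = true <-> P.
Proof. by rewrite /asbool; case: excluded_middle_informative. Qed.

Definition perm_of n bs : 'S_n :=
  odflt 1%g [pick q : 'S_n | [forall i, val (q i) == pf bs i]].

Lemma perm_ofP n bs : all validb bs -> sk bs = n ->
  forall i, val (perm_of n bs i) = pf bs i.
Proof.
move=> hv hs; rewrite /perm_of; case: pickP => [q /forallP hq | hn] i.
  exact/eqP.
have [q hq] := exists_perm hv hs.
have := hn q; move/negbT/forallPn => [j]; by rewrite hq eqxx.
Qed.

Lemma h_hh n : h n = hh n.
Proof.
rewrite /h /hh.
have U : uniq (map (perm_of n) (enumB n n)).
  rewrite map_inj_in_uniq ?uniq_enumB //.
  move=> bs bs' hb hb' e; move: hb hb'; rewrite !mem_enumB //.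
  move=> /andP [hv /eqP hs] /andP [hv' /eqP hs'].
  apply: pf_uniq => //; first by rewrite hs hs'.
  move=> i hi; have I : i < n by rewrite -hs.
  by rewrite -(perm_ofP hv hs (Ordinal I)) -(perm_ofP hv' hs' (Ordinal I)) e.
rewrite -(size_map (perm_of n)) -(card_uniqP U).
apply: eq_card => p; rewrite inE.
apply/idP/idP => H.
  have /bc_iff [bs [hv hs hp]] := proj1 (asboolP _) H.
  apply/mapP; exists bs; first by rewrite mem_enumB // hv hs eqxx.
  apply/permP => i; apply: val_inj; by rewrite hp perm_ofP.
move/mapP: H => [bs hb ->]; apply/asboolP; apply/bc_iff; exists bs.
move: hb; rewrite mem_enumB // => /andP [hv /eqP hs]; split => //; exact: perm_ofP.
Qed.

Definition EE m := \sum_(k < m.+1) (m - k) * hh k.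
Definition SS m := \sum_(k < m.+1) hh k.

Lemma fact1 m : hh m.+1 = EE m + hh m.
Proof.
rewrite hh_rec /EE big_ord_recr [in RHS]big_ord_recr /= subnn mul0n addn0.
have -> : w (m.+1 - m) = 1 by rewrite subSnn.
rewrite mul1n; congr (_ + _); apply: eq_bigr => i _.
have hi := ltn_ord i; rewrite /w.
have -> : (m.+1 - i == 1) = false by apply/negbTE/eqP; lia.
congr (_ * _); lia.
Qed.

Lemma fact2 m : EE m.+1 = EE m + SS m.
Proof.
rewrite /EE /SS big_ord_recr /= subnn mul0n addn0 -big_split /=.
apply: eq_bigr => i _; have hi := ltn_ord i.
have -> : m.+1 - i = (m - i).+1 by lia.
by rewrite mulSn addnC.
Qed.

Lemma fact3 m : SS m.+1 = SS m + hh m.+1.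
Proof. by rewrite /SS big_ord_recr. Qed.

Lemma hh_rec3 m : hh m.+3 + 2 * hh m.+1 = 3 * hh m.+2 + hh m.
Proof.
have := fact1 m; have := fact1 m.+1; have := fact1 m.+2.
have := fact2 m; have := fact2 m.+1; have := fact3 m. lia.
Qed.

Lemma hh0 : hh 0 = 1. Proof. by []. Qed.
Lemma hh1 : hh 1 = 1. Proof. by vm_compute. Qed.
Lemma hh2 : hh 2 = 2. Proof. by vm_compute. Qed.

Lemma Posz_sum n (F : 'I_n -> nat) : Posz (\sum_(i < n) F i) = (\sum_(i < n) Posz (F i))%R.
Proof. exact: (big_morph _ PoszD (erefl (Posz 0))). Qed.
Theorem mainTheorem11 :
  (forall (n m : nat) (p : 'S_n), 0 < m -> block_cyclic p -> block_cyclic (p ^+ m)%g) /\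
  (forall (n : nat) (p : 'S_n), block_cyclic p -> avoids p pat321) /\
  (forall (n : nat) (p : 'S_n), block_cyclic p -> strongly_avoids p pat321) /\
  h 0 = 1%N /\
  (forall n : nat, fps_mul (fun k => Posz (h k)) den1 n = one_fps n) /\
  (forall n : nat, fps_mul (fun k => Posz (h k)) den2 n = num2 n).
Proof.
split; first by move=> n m p _; exact: part1.
split; first exact: part2.
split; first exact: part3.
split; first by rewrite h_hh.
split.
  case=> [|m]; first by rewrite /fps_mul big_ord_recr big_ord0 /= h_hh.
  rewrite /fps_mul big_ord_recr /= subnn h_hh.
  have H : forall i : 'I_m.+1, ((h i)%:Z * den1 (m.+1 - i))%R = (- ((w (m.+1 - i) * hh i)%N)%:Z)%R.
    move=> i; have hi := ltn_ord i; rewrite h_hh /den1 /w.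
    have -> : (m.+1 - i == 0) = false by apply/negbTE/eqP; lia.
    case: eqP => _; rewrite PoszM; lia.
  rewrite (eq_bigr _ (fun i _ => H i)) GRing.sumrN -Posz_sum -hh_rec /=.
  by rewrite GRing.mulr1 GRing.addNr.
case=> [|[|[|m]]].
- by rewrite /fps_mul big_ord_recr big_ord0 /= h_hh.
- by rewrite /fps_mul !big_ord_recr big_ord0 /= !h_hh hh0 hh1.
- by rewrite /fps_mul !big_ord_recr big_ord0 /= !h_hh hh0 hh1 hh2.
rewrite /fps_mul !big_ord_recr /=.
rewrite big1; last first.
  move=> i _; have hi := ltn_ord i.
  by rewrite /den2 nth_default ?GRing.mulr0 //=; lia.
have e3 : m.+3 - m = 3 by lia.
have e2 : m.+3 - m.+1 = 2 by lia.
have e1 : m.+3 - m.+2 = 1 by lia.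
rewrite e3 e2 e1 subnn /den2 /num2 /= !h_hh.
rewrite nth_nil; have := hh_rec3 m; lia.
Qed.
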